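(* Let $q > 0$ and let $m \geq 1$ be an integer. Then \[ \sum_{n=m}^{\lfloor m^2/q \rfloor} \Phi_{n,m}^2 \leq 4\, \frac{m^2}{q}\, e^{-q}. \]
   Context: For integers $n \ge m \ge 1$, $\Phi_{n,m} := \min_{p \in \Pi_m} \max_{|x| \leq 1} |x^n - p(x)|$, where $\Pi_m$ is the set of polynomials with real coefficients of degree at most $m$ and the maximum is over real $x \in [-1,1]$. An empty sum is zero. *)

(* Defs.v *)
From HB Require Import structures.
From mathcomp Require Import all_boot all_order all_algebra.
From mathcomp Require Import all_classical all_reals all_analysis.
Set Implicit Arguments. Unset Strict Implicit. Unset Printing Implicit Defensive.
Import Order.TTheory GRing.Theory Num.Theory.
Local Open Scope classical_set_scope.
Local Open Scope ring_scope.

Definition unif_err {R : realType} (n : nat) (p : {poly R}) : R :=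
  sup [set y : R | exists x : R, -1 <= x <= 1 /\ y = `|x ^+ n - p.[x]|].

(* Phi_{n,m} = min over real polynomials p of degree <= m of unif_err n p
   (degree <= m  <->  size p <= m.+1; the min is attained, so it equals the inf) *)
Definition Phi {R : realType} (n m : nat) : R :=
  inf [set e : R | exists p : {poly R}, (size p <= m.+1)%N /\ e = unif_err n p].

(* Main.v *)
Require Import Defs.
From HB Require Import structures.
From mathcomp Require Import all_boot all_order all_algebra.
From mathcomp Require Import all_classical all_reals all_analysis.
From mathcomp Require Import ring lra zify.
Import Order.TTheory GRing.Theory Num.Theory numFieldNormedType.Exports.
Local Open Scope classical_set_scope.
Local Open Scope ring_scope.

Section Aux.
Variable R : realType.

Lemma mono0 (f df : R -> R) :
  (forall x, is_derive (x:R) (1:R) f (df x)) -> (forall x, 0 <= x -> 0 <= df x) ->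
  forall t, 0 <= t -> f 0 <= f t.
Proof.
move=> fd dpos t t0.
have [c cI E] : exists2 c, c \in `[0, t]%R & f t - f 0 = df c * (t - 0).
  have cf : continuous f.
    move=> x; exact/differentiable_continuous/derivable1_diffP/(@ex_derive _ _ _ _ _ _ _ (fd x)).
  apply: MVT_segment => //; exact/continuous_subspaceT/cf.
rewrite -subr_ge0 E mulr_ge0 ?subr0 //; apply: dpos.
by move: cI; rewrite in_itv /= => /andP[].
Qed.

Lemma dexpN x : is_derive (x:R) (1:R) (fun t : R => expR (- t)) (- expR (- x)).
Proof.
have h := @is_derive1_comp R expR (fun t => - t) x (expR (- x)) (-1) (is_derive_expR _) (is_deriveNid _ _).
by rewrite mulrN1 in h.
Qed.

Lemma k_ge0 (t : R) : 0 <= t -> 0 <= t * (expR t + expR (- t)) - (expR t - expR (- t)).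
Proof.
move=> t0.
pose f := fun s : R => s * (expR s + expR (- s)) - (expR s - expR (- s)).
have := @mono0 f (fun s => s * (expR s - expR (- s))) _ _ t t0.
rewrite /f mul0r expR0 oppr0 expR0 subrr subr0; apply.
- move=> x; rewrite /f.
  have e1 := dexpN x.
  have h1 := is_deriveD (is_derive_expR x) e1.
  have h2 := is_deriveM (is_derive_id x 1) h1.
  have h3 := is_deriveB (is_derive_expR x) e1.
  have h4 := is_deriveB h2 h3.
  apply: (is_derive_eq h4).
  rewrite /= !scaler1 -[x *: _]/(x * _) -[(expR + _) x]/(expR x + expR (- x)).
  ring.
- move=> x x0; apply: mulr_ge0 => //; rewrite subr_ge0 ler_expR; lra.
Qed.

Lemma cosh_le (t : R) : 0 <= t -> expR t + expR (- t) <= 2 * expR (t ^+ 2 / 2).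
Proof.
move=> t0.
pose g := fun s : R => - (expR (- (s ^+ 2) / 2) * (expR s + expR (- s))).
have H : g 0 <= g t.
  apply: (@mono0 g (fun s => expR (- (s ^+ 2) / 2) * (s * (expR s + expR (- s)) - (expR s - expR (- s))))) => //; last first.
    move=> x x0; apply: mulr_ge0; [exact: expR_ge0| exact: k_ge0].
  move=> x.
  have e1 := dexpN x.
  have h1 := is_deriveD (is_derive_expR x) e1.
  have q1 := is_deriveZ (-1/2) (is_deriveX 2 (is_derive_id x 1)).
  have q2 := @is_derive1_comp R expR _ x _ _ (is_derive_expR _) q1.
  have h2 := is_deriveN (is_deriveM q2 h1).
  have eg : g = - ((expR \o ((-1/2) *: (id ^+ 2))) * (expR + (fun t => expR (-t)))).
    apply/funext => s; rewrite /g !fctE -[_ *: _]/(_ * _); congr (- (expR _ * _)); ring.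
  rewrite eg. apply: (is_derive_eq h2).
  rewrite !fctE /= -![_ *: _]/(_ * _) /GRing.scale /=.
  have -> : -1 / 2 * x ^+ 2 = - x ^+ 2 / 2 by ring.
  set E := expR (- x ^+ 2 / 2).
  have -> : (-1 / 2 * (2 * x ^+ 1 * 1)) = - x :> R by field.
  ring.
have z : - (0:R) ^+ 2 / 2 = 0 by rewrite expr2 mul0r oppr0 mul0r.
move: H; rewrite /g z oppr0 !expR0 mul1r lerN2 => H.
have E1 : expR (- t ^+ 2 / 2) * expR (t ^+ 2 / 2) = 1 by rewrite -expRD mulNr addNr expR0.
have A0 := expR_gt0 (t ^+ 2 / 2).
have := expR_gt0 (- t ^+ 2 / 2).
move: H E1 A0; set a := expR (t ^+ 2 / 2); set b := expR (- t ^+ 2 / 2); set c := expR t + expR (- t).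
move=> H E1 A0 B0.
have -> : c = a * (b * c) by rewrite mulrA (mulrC a) E1 mul1r.
by rewrite mulrC ler_wpM2r // ltW.
Qed.

Fixpoint Tpair (j : nat) : {poly R} * {poly R} :=
  if j is j'.+1 then ((Tpair j').2, 2%:P * 'X * (Tpair j').2 - (Tpair j').1) else (1, 'X).
Definition Tp j := (Tpair j).1.

Lemma TpSS j : Tp j.+2 = 2%:P * 'X * Tp j.+1 - Tp j.
Proof. by []. Qed.

Lemma size_Tp j : (size (Tp j) <= j.+1)%N.
Proof.
suff : (size (Tp j) <= j.+1)%N /\ (size (Tp j.+1) <= j.+2)%N by case.
elim: j => [|j [IH1 IH2]]; first by rewrite /Tp /= size_poly1 size_polyX.
split => //; rewrite TpSS.
apply: (leq_trans (size_polyD _ _)); rewrite geq_max; apply/andP; split; last first.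
  rewrite size_polyN; exact: (leq_trans IH1 (leq_trans (leqnSn _) (leqnSn _))).
apply: (leq_trans (size_mul_leq _ _)).
have h2 : (size (2%:P * 'X : {poly R})%R <= 2)%N.
  apply: (leq_trans (size_mul_leq _ _)); rewrite size_polyX.
  by have := size_polyC_leq1 (2:R); case: (size _) => [|[]].
move: h2 IH2; case: (size (2%:P * 'X : {poly R})%R) => [|[|[|k]]] //= _;
  case: (size (Tp j.+1)) => // k; rewrite !ltnS.
all: lia.
Qed.

Section Cheb.
Variable x : R.
Definition c j := (Tp j).[x].

Lemma cSS j : c j.+2 = 2 * x * c j.+1 - c j.
Proof. by rewrite /c TpSS !hornerE. Qed.

Lemma c0 : c 0 = 1. Proof. by rewrite /c /Tp /= hornerE. Qed.
Lemma c1 : c 1 = x. Proof. by rewrite /c /Tp /= hornerX. Qed.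

Lemma pell j : exists s, c j ^+ 2 - (x ^+ 2 - 1) * s ^+ 2 = 1 /\ c j.+1 = x * c j + (x ^+ 2 - 1) * s.
Proof.
elim: j => [|j [s [H1 H2]]].
  by exists 0; rewrite c0 c1; split; ring.
exists (c j + x * s); split.
  by rewrite H2 -[RHS]H1; ring.
rewrite cSS H2; ring.
Qed.

Lemma c_bound j : -1 <= x <= 1 -> `|c j| <= 1.
Proof.
move=> /andP[h1 h2].
have [s [H _]] := pell j.
rewrite -ler_sqr ?normr_ge0 ?nnegrE ?ler01 // ?expr1n ?real_normK ?num_real //.
have : 0 <= (1 - x ^+ 2) * s ^+ 2 by apply: mulr_ge0; [nra| exact: sqr_ge0].
nra.
Qed.

Definition CC (z : int) := c `|z|%N.

Lemma CCstep z : 2 * x * CC z = CC (z + 1) + CC (z - 1).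
Proof.
rewrite /CC; case: z => [[|j]|j].
- have -> : absz (Posz 0 + 1) = 1%N by [].
  have -> : absz (Posz 0 - 1) = 1%N by [].
  by rewrite c0 c1; ring.
- have -> : absz (Posz j.+1 + 1) = j.+2 by lia.
  have -> : absz (Posz j.+1 - 1) = j by lia.
  by rewrite cSS; ring.
- have -> : absz (Negz j + 1) = j by lia.
  have -> : absz (Negz j - 1) = j.+2 by lia.
  by rewrite cSS; ring.
Qed.

Lemma cheb_sum n : \sum_(k < n.+1) 'C(n, k)%:R * CC (n%:Z - (2 * k)%:Z) = (2 * x) ^+ n.
Proof.
elim: n => [|n IH].
  by rewrite big_ord_recl big_ord0 addr0 bin0 /CC /= c0 mulr1.
rewrite exprS -IH mulr_sumr.
under [RHS]eq_bigr => i _ do rewrite mulrCA CCstep mulrDr.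
rewrite big_split /= big_ord_recl /=.
under eq_bigr => i _ do rewrite binS natrD mulrDl.
rewrite big_split /= addrA; congr (_ + _); last first.
  apply: eq_bigr => i _; congr (_ * CC _); rewrite /bump /=; lia.
rewrite big_ord_recr /= big_ord_recl /= (bin_small (ltnSn n)) mul0r addr0 !bin0 !mul1r.
congr (_ + _); first by congr (CC _); lia. rewrite addr0.
apply: eq_bigr => i _; congr (_ * CC _); rewrite /bump /=; lia.
Qed.
End Cheb.

Lemma binexp (l : R) n :
  \sum_(k < n.+1) 'C(n, k)%:R * expR (l * (n%:R - 2 * k%:R)) = (expR l + expR (- l)) ^+ n.
Proof.
rewrite exprDn; apply: eq_bigr => k _.
rewrite -[RHS]mulr_natl; congr (_ * _).
rewrite -!expRM_natl -expRD; congr expR.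
rewrite natrB; last by rewrite -ltnS ltn_ord.
ring.
Qed.

Lemma intr_d n k : ((n%:Z - (2 * k)%:Z)%:~R : R) = n%:R - 2 * k%:R.
Proof. by rewrite intrD intrN -[(n%:Z)%:~R]/(n%:R) -[((2*k)%:Z)%:~R]/((2*k)%:R) natrM. Qed.

Lemma tail n m : (0 < n)%N ->
  \sum_(k < n.+1 | ~~ (absz (n%:Z - (2 * k)%:Z) <= m)%N) ('C(n, k)%:R : R)
    <= 2 * 2 ^+ n * expR (- (m%:R ^+ 2) / (2 * n%:R)).
Proof.
move=> n0.
have nR : (0 : R) < n%:R by rewrite ltr0n.
set l : R := m%:R / n%:R.
have l0 : 0 <= l by rewrite divr_ge0.
set E := fun k : nat => expR (l * (n%:R - 2 * k%:R) - l * m%:R) +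
                        expR (- l * (n%:R - 2 * k%:R) - l * m%:R).
have key k : ~~ (absz (n%:Z - (2 * k)%:Z) <= m)%N -> 1 <= E k.
  rewrite -ltnNge -(ltr_nat R) natr_absz intr_norm intr_d ltr_normr => /orP[] H.
  - have h1 : 1 <= expR (l * (n%:R - 2 * k%:R) - l * m%:R).
      apply: le_trans (expR_ge1Dx _); rewrite lerDl -mulrBr mulr_ge0 // subr_ge0; exact: ltW.
    have := expR_ge0 (- l * (n%:R - 2 * k%:R) - l * m%:R); rewrite /E; lra.
  - have h1 : 1 <= expR (- l * (n%:R - 2 * k%:R) - l * m%:R).
      apply: le_trans (expR_ge1Dx _); rewrite lerDl mulNr -mulrN -mulrBr mulr_ge0 // subr_ge0; exact: ltW.
    have := expR_ge0 (l * (n%:R - 2 * k%:R) - l * m%:R); rewrite /E; lra.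
have E0 k : 0 <= E k by rewrite /E addr_ge0 ?expR_ge0.
apply: (le_trans (y := \sum_(k < n.+1) 'C(n, k)%:R * E k)).
  rewrite [X in _ <= X](bigID (fun k : 'I_n.+1 => ~~ (absz (n%:Z - (2 * k)%:Z) <= m)%N)) /=.
  rewrite -[X in X <= _]addr0 lerD //; last by apply: sumr_ge0 => i _; rewrite mulr_ge0.
  apply: ler_sum => i /key H; rewrite -[X in X <= _]mulr1 ler_wpM2l //.
have -> : \sum_(k < n.+1) 'C(n, k)%:R * E k =
   expR (- (l * m%:R)) * ((expR l + expR (- l)) ^+ n + (expR (- l) + expR (- - l)) ^+ n).
  rewrite -!binexp -big_split mulr_sumr /=; apply: eq_bigr => k _.
  rewrite /E !expRD; ring.
rewrite opprK [expR (- l) + _]addrC -mulr2n.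
have hc := @cosh_le l l0.
have h1 : (expR l + expR (- l)) ^+ n <= (2 * expR (l ^+ 2 / 2)) ^+ n.
  by rewrite lerXn2r // nnegrE ?addr_ge0 ?mulr_ge0 ?expR_ge0.
apply: (le_trans (y := expR (- (l * m%:R)) * ((2 * expR (l ^+ 2 / 2)) ^+ n *+ 2))).
  by rewrite ler_wpM2l ?expR_ge0 // lerMn2r h1 orbT.
have -> : expR (- (l * m%:R)) * ((2 * expR (l ^+ 2 / 2)) ^+ n *+ 2) =
    2 * 2 ^+ n * expR (- (l * m%:R) + n%:R * (l ^+ 2 / 2)).
  by rewrite exprMn -expRM_natl expRD -mulr_natr; ring.
rewrite le_eqVlt; apply/orP; left; apply/eqP; congr (_ * expR _).
rewrite /l; field; rewrite pnatr_eq0 -lt0n //.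
Qed.
Definition goodk (n m : nat) (k : nat) := (absz (n%:Z - (2 * k)%:Z) <= m)%N.

Definition pA (n m : nat) : {poly R} :=
  (2 ^+ n)^-1 *: \sum_(k < n.+1 | goodk n m k) 'C(n, k)%:R *: Tp (absz (n%:Z - (2 * k)%:Z)).

Lemma size_pA n m : (size (pA n m) <= m.+1)%N.
Proof.
rewrite /pA; apply: leq_trans (size_scale_leq _ _) _.
apply: (big_ind (fun p : {poly R} => (size p <= m.+1)%N)).
- by rewrite size_poly0.
- move=> p q hp hq; apply: leq_trans (size_polyD _ _) _; by rewrite geq_max hp hq.
- move=> k hk; apply: leq_trans (size_scale_leq _ _) _; apply: leq_trans (size_Tp _) _; exact: hk.
Qed.

Lemma err_pA n m (x : R) : (0 < n)%N -> -1 <= x <= 1 ->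
  `|x ^+ n - (pA n m).[x]| <= 2 * expR (- (m%:R ^+ 2) / (2 * n%:R)).
Proof.
move=> n0 hx.
have hs := cheb_sum x n.
have p2 : (2 : R) ^+ n != 0 by rewrite expf_neq0 // pnatr_eq0.
have -> : x ^+ n = (2 ^+ n)^-1 * \sum_(k < n.+1) 'C(n, k)%:R * CC x (n%:Z - (2 * k)%:Z).
  by rewrite hs exprMn mulKf.
rewrite (bigID (fun k : 'I_n.+1 => goodk n m k)) /=.
rewrite /pA hornerZ horner_sum.
rewrite /CC /c.
under [X in _ - _ * X]eq_bigr do rewrite hornerZ.
set A := \sum_(i < n.+1 | goodk n m i) _.
set B := \sum_(i < n.+1 | ~~ goodk n m i) _.
have -> : (2 ^+ n)^-1 * (A + B) - (2 ^+ n)^-1 * A = (2 ^+ n)^-1 * B by ring.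
have hB : `|B| <= \sum_(k < n.+1 | ~~ goodk n m k) ('C(n, k)%:R : R).
  apply: le_trans (ler_norm_sum _ _ _) _; apply: ler_sum => k _.
  rewrite normrM ger0_norm // -[X in _ <= X]mulr1 ler_wpM2l //.
  exact: c_bound.
have ht := @tail n m n0.
rewrite normrM ger0_norm ?invr_ge0 ?exprn_ge0 //.
apply: le_trans (ler_wpM2l _ (le_trans hB ht)) _; first by rewrite invr_ge0 exprn_ge0.
by rewrite (mulrC 2) -!mulrA mulKf.
Qed.


Lemma unif_err_ge0 n (p : {poly R}) : 0 <= unif_err n p.
Proof.
rewrite /unif_err.
case: (pselect (has_sup [set y : R | exists x : R, -1 <= x <= 1 /\ y = `|x ^+ n - p.[x]|])) => h.
  have hm : [set y : R | exists x : R, -1 <= x <= 1 /\ y = `|x ^+ n - p.[x]|] `|(0:R) ^+ n - p.[0]|.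
    exists 0; split => //; apply/andP; split => //; by rewrite lerN10.
  exact: (le_trans (normr_ge0 _) (sup_upper_bound h hm)).
by rewrite sup_out.
Qed.

Lemma Phi_bounds n m : (0 < n)%N ->
  0 <= (Phi n m : R) /\ (Phi n m : R) <= 2 * expR (- (m%:R ^+ 2) / (2 * n%:R)).
Proof.
move=> n0; rewrite /Phi.
have lb : lbound [set e : R | exists p : {poly R}, (size p <= m.+1)%N /\ e = unif_err n p] 0.
  by move=> e [p [_ ->]]; exact: unif_err_ge0.
split.
  apply: lb_le_inf => //; exists (unif_err n (0 : {poly R})); exists 0; split => //.
  by rewrite size_poly0.
apply: (le_trans (y := unif_err n (pA n m))).
  by apply: (ge_inf (ex_intro _ 0 lb)); exists (pA n m); split => //; exact: size_pA.
rewrite /unif_err; apply: ge_sup.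
  exists `|(0:R) ^+ n - (pA n m).[0]|; exists 0; split => //; apply/andP; split => //.
by move=> y [x [hx ->]]; exact: err_pA.
Qed.
End Aux.

Theorem lemma2 (R : realType) (q : R) (m : nat) (hq : 0 < q) (hm : (1 <= m)%N) :
  \sum_(m <= n < (Num.truncn ((m%:R ^+ 2) / q)).+1) (Phi n m : R) ^+ 2
    <= 4 * ((m%:R ^+ 2) / q) * expR (- q).
Proof.
set N := Num.truncn ((m%:R ^+ 2) / q).
have hN : (N%:R : R) <= m%:R ^+ 2 / q by rewrite truncn_le divr_ge0 // ?ltW // exprn_ge0.
have term n : (m <= n < N.+1)%N -> (Phi n m : R) ^+ 2 <= 4 * expR (- q).
  move=> /andP[h1 h2].
  have n0 : (0 < n)%N by apply: leq_trans hm h1.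
  have nR : (0 : R) < n%:R by rewrite ltr0n.
  have [P0 P1] := @Phi_bounds R n m n0.
  apply: (le_trans (y := (2 * expR (- m%:R ^+ 2 / (2 * n%:R))) ^+ 2)).
    by rewrite lerXn2r // nnegrE // (le_trans P0 P1).
  rewrite exprMn -expRM_natl.
  have -> : (2 : R) ^+ 2 = 4 by rewrite expr2; lra.
  rewrite ler_wpM2l // ler_expR.
  have hn : (n%:R : R) <= m%:R ^+ 2 / q by apply: le_trans hN; rewrite ler_nat.
  rewrite ler_pdivlMr // in hn.
  have -> : 2%:R * (- m%:R ^+ 2 / (2 * n%:R)) = - (m%:R ^+ 2 / n%:R) :> R.
    by field; rewrite pnatr_eq0 -lt0n.
  rewrite lerN2 ler_pdivlMr //; lra.
apply: (le_trans (y := \sum_(m <= n < N.+1) 4 * expR (- q))).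
  rewrite [X in X <= _]big_nat_cond [X in _ <= X]big_nat_cond.
  by apply: ler_sum => n /andP[hn _]; exact: term.
rewrite sumr_const_nat -[_ *+ (N.+1 - m)]mulr_natr [X in _ <= X]mulrAC.
apply: ler_wpM2l; first by rewrite mulr_ge0 ?expR_ge0.
apply: le_trans hN; rewrite ler_nat; lia.
Qed.
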